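(* Let $(G_0,\mathfrak g)$ be a super Poincaré group. Then $\Gamma=\{p\mid\Phi_p\ge0\}$, i.e. for any $p\in\mathbb R^{1,D-1}$, $\Phi_p\ge0$ if and only if $p_0\ge0$ and $\langle p,p\rangle\ge0$. Moreover, if $p_0>0$ and $\langle p,p\rangle>0$, then $\Phi_p>0$ (positive definite).
   Context: A super Poincaré group is a super Lie group $(G_0,\mathfrak g)$ (a real Lie group $G_0$ and finite-dimensional real super Lie algebra $\mathfrak g=\mathfrak g_0\oplus\mathfrak g_1$, $\mathfrak g_0=\mathrm{Lie}(G_0)$, $G_0$ acting on $\mathfrak g$ by even automorphisms extending Ad with differential ad) with $G_0=T_0\rtimes L_0$, $T_0=\mathbb R^{1,D-1}$, $D\ge4$, $\langle x,x'\rangle=x_0x'_0-\sum_{j\ge1}x_jx'_j$, $L_0=\mathrm{Spin}(1,D-1)$ acting on $T_0$ via its covering of $\mathrm{SO}_0(1,D-1)$, $\mathfrak g_1$ a real spinorial $L_0$-module (its complexification a direct sum of complex spin representations), $T_0$ acting trivially on $\mathfrak g_1$, $[\mathfrak g_1,\mathfrak g_1]\subset\mathfrak t_0$, and $\langle[X,X],x\rangle>0$ for all $0\neq X\in\mathfrak g_1$, $x\in\Gamma^+=\{x:\langle x,x\rangle>0,x_0>0\}$. $\Gamma=\{p:\langle p,p\rangle\ge0,p_0\ge0\}$. For $p\in\mathbb R^{1,D-1}$ (identified with $T_0^\ast$ via $\langle\cdot,\cdot\rangle$), $\Phi_p(X,Y)=\frac12\langle[X,Y],p\rangle$ on $\mathfrak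 g_1$, and $\Phi_p\ge0$ means $\Phi_p(X,X)\ge0$ for all $X$. *)

(* Defs.v *)
From HB Require Import structures.
From mathcomp Require Import all_boot all_order all_algebra.
From mathcomp Require Import reals.
Set Implicit Arguments.
Unset Strict Implicit.
Unset Printing Implicit Defensive.
Import Order.TTheory GRing.Theory Num.Theory.
Local Open Scope ring_scope.

Section Minkowski.
Variables (R : realType) (D : nat).

(* Minkowski space R^{1,D-1} as row vectors 'rV[R]_D; coordinate 0 is time. *)
Definition tcomp (x : 'rV[R]_D) : R := \sum_(j < D | val j == 0%N) x 0 j.

Definition mink (x y : 'rV[R]_D) : R :=
  \sum_(j < D) (if val j == 0%N then 1 else -1) * (x 0 j * y 0 j).

Definition in_Gamma (p : 'rV[R]_D) : Prop := 0 <= mink p p /\ 0 <= tcomp p.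
Definition in_Gamma_plus (x : 'rV[R]_D) : Prop := 0 < mink x x /\ 0 < tcomp x.

Definition lorentz0 (L : 'M[R]_D) : Prop :=
  (forall x y : 'rV[R]_D, mink (x *m L) (y *m L) = mink x y) /\
  \det L = 1 /\
  (forall x, in_Gamma_plus x -> in_Gamma_plus (x *m L)).

End Minkowski.

(* A super Poincare group (G_0, g) with G_0 = T_0 x| L_0, g_1 = R^N.
   Actions are left actions written on row vectors, so the matrix of a product
   is the reversed product of matrices. *)
Record super_poincare (R : realType) (D N : nat) := SuperPoincare {
  spL : Type;
  spmul : spL -> spL -> spL;
  spone : spL;
  spinv : spL -> spL;
  spmulA : forall a b c, spmul a (spmul b c) = spmul (spmul a b) c;
  spmul1g : forall a, spmul spone a = a;
  spmulVg : forall a, spmul (spinv a) a = spone;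
  cover : spL -> 'M[R]_D;
  cover_mul : forall a b, cover (spmul a b) = cover b *m cover a;
  cover_lorentz : forall a, lorentz0 (cover a);
  cover_onto : forall L : 'M[R]_D, lorentz0 L -> exists a, cover a = L;
  rho : spL -> 'M[R]_N;
  rho_mul : forall a b, rho (spmul a b) = rho b *m rho a;
  rho_one : rho spone = 1%:M;
  br : 'rV[R]_N -> 'rV[R]_N -> 'rV[R]_D;
  br_sym : forall X Y, br X Y = br Y X;
  br_linear : forall (c : R) X Y Z, br (c *: X + Y) Z = c *: br X Z + br Y Z;
  br_equiv : forall a X Y, br (X *m rho a) (Y *m rho a) = br X Y *m cover a;
  br_pos : forall X x, X != 0 -> in_Gamma_plus x -> 0 < mink (br X X) x
}.

Definition Phi (R : realType) (D N : nat) (G : super_poincare R D N)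
  (p : 'rV[R]_D) (X Y : 'rV[R]_N) : R := 2^-1 * mink (br G X Y) p.

Definition Phi_nonneg (R : realType) (D N : nat) (G : super_poincare R D N)
  (p : 'rV[R]_D) : Prop := forall X, 0 <= Phi G p X X.

Definition Phi_posdef (R : realType) (D N : nat) (G : super_poincare R D N)
  (p : 'rV[R]_D) : Prop := forall X, X != 0 -> 0 < Phi G p X X.

(* Main.v *)
Require Import Defs.
From HB Require Import structures.
From mathcomp Require Import all_boot all_order all_algebra.
From mathcomp Require Import reals.
From mathcomp Require Import ring lra.
Import Order.TTheory GRing.Theory Num.Theory.
Local Open Scope ring_scope.

Section Mk.
Variables (R : realType) (D : nat) (hD0 : (0 < D)%N).

Implicit Types (x y z r : 'rV[R]_D).
Definition sg (j : 'I_D) : R := if val j == 0%N then 1 else -1.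
Definition eta : 'M[R]_D := diag_mx (\row_j sg j).
Definition i0 : 'I_D := Ordinal hD0.
Definition e0 : 'rV[R]_D := delta_mx 0 i0.

Lemma minkE (x y : 'rV[R]_D) : mink x y = (x *m eta *m y^T) 0 0.
Proof.
rewrite /mink /eta mul_mx_diag !mxE; apply: eq_bigr => j _.
rewrite !mxE /sg; ring.
Qed.

Lemma minkC x y : mink x y = mink y x.
Proof. rewrite /mink; apply: eq_bigr => j _; ring. Qed.

Lemma minkDl x y z : mink (x + y) z = mink x z + mink y z.
Proof. rewrite /mink -big_split /=; apply: eq_bigr => j _; rewrite !mxE; ring. Qed.

Lemma minkZl k x y : mink (k *: x) y = k * mink x y.
Proof. rewrite /mink mulr_sumr; apply: eq_bigr => j _; rewrite !mxE; ring. Qed.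

Lemma minkNl x y : mink (- x) y = - mink x y.
Proof. by rewrite -scaleN1r minkZl mulN1r. Qed.

Lemma minkDr x y z : mink z (x + y) = mink z x + mink z y.
Proof. by rewrite minkC minkDl !(minkC z). Qed.
Lemma minkZr k x y : mink y (k *: x) = k * mink y x.
Proof. by rewrite minkC minkZl (minkC y). Qed.
Lemma minkNr x y : mink y (- x) = - mink y x.
Proof. by rewrite minkC minkNl (minkC y). Qed.
Lemma mink0l y : mink 0 y = 0.
Proof. by rewrite -(scale0r 0) minkZl mul0r. Qed.

Lemma delta_sum (F : 'I_D -> R) i : \sum_j (j == i)%:R * F j = F i.
Proof.
rewrite (bigD1 i) //= eqxx mul1r big1 ?addr0 // => j /negbTE ->; by rewrite mul0r.
Qed.

Lemma mink_deltal i y : mink (delta_mx 0 i) y = sg i * y 0 i.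
Proof.
rewrite /mink -(delta_sum (fun j => sg j * y 0 j)); apply: eq_bigr => j _.
rewrite mxE eqxx /= /sg; exact: mulrCA.
Qed.
Lemma mink_deltar i y : mink y (delta_mx 0 i) = sg i * y 0 i.
Proof. by rewrite minkC mink_deltal. Qed.

Lemma sg0 : sg i0 = 1. Proof. by rewrite /sg eqxx. Qed.
Lemma mink_e0l y : mink e0 y = y 0 i0. Proof. by rewrite mink_deltal sg0 mul1r. Qed.
Lemma mink_e0r y : mink y e0 = y 0 i0. Proof. by rewrite mink_deltar sg0 mul1r. Qed.

Lemma tcompE x : tcomp x = x 0 i0.
Proof. by rewrite /tcomp (big_pred1 i0) // => j; rewrite /= -val_eqE. Qed.

Lemma spatial_le0 r : r 0 i0 = 0 -> mink r r <= 0.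
Proof.
move=> h; rewrite /mink; apply: sumr_le0 => j _; rewrite /sg.
case: ifP => hj.
  have -> : j = i0 by apply/val_inj => /=; apply/eqP.
  by rewrite h mulr0 mulr0.
by rewrite mulN1r oppr_le0 -expr2 sqr_ge0.
Qed.

Lemma TE (A P x : 'rV[R]_D) : x *m (eta *m A^T *m P) = mink x A *: P.
Proof. by rewrite !mulmxA minkE {1}[x *m eta *m A^T]mx11_scalar mul_scalar_mx. Qed.

Lemma entry_delta (A : 'M[R]_D) (i j : 'I_D) :
  ((delta_mx 0 i : 'rV[R]_D) *m A *m (delta_mx 0 j : 'rV[R]_D)^T) 0 0 = A i j.
Proof. by rewrite -rowE trmx_delta -colE !mxE. Qed.

Lemma det_sq (M : 'M[R]_D) :
  (forall x y, mink (x *m M) (y *m M) = mink x y) -> \det M * \det M = 1.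
Proof.
move=> hM.
have E : M *m eta *m M^T = eta.
  apply/matrixP => i j.
  rewrite -entry_delta -[RHS]entry_delta -minkE -hM minkE.
  by rewrite trmx_mul !mulmxA.
have : \det (M *m eta *m M^T) = \det eta by rewrite E.
rewrite !det_mulmx det_tr => h.
have nz : \det eta != 0.
  rewrite /eta det_diag; apply/prodf_neq0 => i _; rewrite mxE /sg.
  by case: ifP => _; rewrite ?oppr_eq0 oner_eq0.
apply: (mulIf nz); by rewrite mul1r -{2}h mulrAC.
Qed.

End Mk.

Section Boost.
Variables (R : realType) (D : nat) (hD0 : (0 < D)%N).
Implicit Types (x y z r : 'rV[R]_D).
Local Notation e0 := (@e0 R D hD0).
Local Notation i0 := (@i0 D hD0).
Local Notation eta := (eta R D).

Lemma e00 : e0 0 i0 = 1. Proof. by rewrite mxE !eqxx. Qed.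

Variables (f : 'rV[R]_D) (hff : mink f f = -1) (hfe : f 0 i0 = 0).

Definition TT (A P : 'rV[R]_D) : 'M[R]_D := eta *m A^T *m P.

Definition Bm (c s : R) : 'M[R]_D :=
  1%:M + ((c - 1) *: TT e0 e0 - s *: TT f e0 + s *: TT e0 f - (c - 1) *: TT f f).

Definition gfun (c s : R) x : 'rV[R]_D :=
  x + ((c - 1) * mink x e0 - s * mink x f) *: e0 + (s * mink x e0 - (c - 1) * mink x f) *: f.

Lemma BmE c s x : x *m Bm c s = gfun c s x.
Proof.
rewrite /Bm /gfun mulmxDr mulmx1 !mulmxDr !mulmxN -!scalemxAr !TE.
by apply/rowP => j; rewrite !mxE; ring.
Qed.

Lemma g_e0 c s x : mink (gfun c s x) e0 = c * mink x e0 - s * mink x f.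
Proof.
rewrite /gfun !(minkDl, minkZl) !mink_e0r e00 hfe; ring.
Qed.

Lemma g_f c s x : mink (gfun c s x) f = c * mink x f - s * mink x e0.
Proof.
rewrite /gfun !(minkDl, minkZl) hff mink_e0l hfe; ring.
Qed.

Lemma g_perp c s x (n : 'rV[R]_D) : n 0 i0 = 0 -> mink f n = 0 -> mink (gfun c s x) n = mink x n.
Proof.
move=> h1 h2; rewrite /gfun !(minkDl, minkZl) h2 mink_e0l h1; ring.
Qed.

Lemma g_mink c s x y : c ^+ 2 - s ^+ 2 = 1 -> mink (gfun c s x) (gfun c s y) = mink x y.
Proof.
move=> hcs; rewrite /gfun !(minkDl, minkZl, minkDr, minkZr) hff !mink_e0l !mink_e0r e00 hfe.
rewrite (minkC _ _ f y).
apply/eqP; rewrite -subr_eq0; apply/eqP.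
set L := (X in X = 0).
have -> : L = (c ^+ 2 - s ^+ 2 - 1) * (x 0 i0 * y 0 i0 - mink x f * mink y f) by rewrite /L; ring.
by rewrite hcs subrr mul0r.
Qed.

Lemma g_orth c s x : 0 < c -> c ^+ 2 - s ^+ 2 = 1 -> in_Gamma_plus x -> in_Gamma_plus (gfun c s x).
Proof.
move=> hc hcs [h1 h2]; split; first by rewrite g_mink.
rewrite tcompE -mink_e0r g_e0 mink_e0r; rewrite tcompE in h2.
set a := x 0 i0; set p := mink x f.
have hr : mink (x - a *: e0 + p *: f) (x - a *: e0 + p *: f) <= 0.
  apply: spatial_le0; rewrite !mxE !eqxx hfe /a /=; ring.
rewrite !(minkDl, minkZl, minkDr, minkZr, minkNl, minkNr) hff !mink_e0l !mink_e0r e00 hfe in hr.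
rewrite (minkC _ _ f x) -/p -/a in hr.
have hap : p ^+ 2 < a ^+ 2 by nra.
have hs : 0 <= s ^+ 2 * (a ^+ 2 - p ^+ 2) by rewrite mulr_ge0 ?sqr_ge0 // subr_ge0 ltW.
have hca : (s * p) ^+ 2 < (c * a) ^+ 2 by nra.
have : 0 < c * a by rewrite mulr_gt0.
nra.
Qed.

Lemma Bm_mink c s x y : c ^+ 2 - s ^+ 2 = 1 -> mink (x *m Bm c s) (y *m Bm c s) = mink x y.
Proof. by move=> h; rewrite !BmE g_mink. Qed.

Lemma Bm2_lorentz c s : 0 < c -> c ^+ 2 - s ^+ 2 = 1 -> lorentz0 (Bm c s *m Bm c s).
Proof.
move=> hc hcs; split; last split.
- by move=> x y; rewrite !mulmxA !Bm_mink.
- by rewrite det_mulmx det_sq // => x y; rewrite Bm_mink.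
- by move=> x hx; rewrite mulmxA !BmE; do 2 apply: g_orth => //; rewrite -BmE.
Qed.

End Boost.

Section Main.
Variables (R : realType) (D N : nat) (hD : (4 <= D)%N) (hN : (0 < N)%N)
  (G : super_poincare R D N).
Implicit Types (x y z r p w : 'rV[R]_D).

Let hD0 : (0 < D)%N. Proof. by apply: leq_trans hD. Qed.
Let hD1 : (1 < D)%N. Proof. by apply: leq_trans hD. Qed.
Let hD2 : (2 < D)%N. Proof. by apply: leq_trans hD. Qed.
Local Notation e0 := (@e0 R D hD0).
Local Notation i0 := (@i0 D hD0).
Let i1 : 'I_D := Ordinal hD1.
Let i2 : 'I_D := Ordinal hD2.
Let e1 : 'rV[R]_D := delta_mx 0 i1.
Let e2 : 'rV[R]_D := delta_mx 0 i2.

Lemma S_closed (Y : 'rV[R]_N) L : lorentz0 L -> exists Y', br G Y' Y' = br G Y Y *m L.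
Proof.
move=> hL; have [a ha] := cover_onto G hL.
by exists (Y *m rho a); rewrite br_equiv ha.
Qed.

Lemma e0_plus : in_Gamma_plus e0.
Proof. by split; rewrite ?tcompE ?mink_e0l e00 ltr01. Qed.

Lemma limit_lemma w p : (forall x, in_Gamma_plus x -> 0 < mink w x) -> in_Gamma p ->
  0 <= mink w p.
Proof.
move=> hw [h1 h2]; rewrite leNgt; apply/negP => hneg.
rewrite tcompE in h2.
set a := - mink w p; set b := `|w 0 i0|.
have ha : 0 < a by rewrite /a oppr_gt0.
have hb : 0 <= b by rewrite /b normr_ge0.
set eps := a / (b + 1).
have he : 0 < eps by rewrite divr_gt0 // ltr_wpDl.
have hx : in_Gamma_plus (p + eps *: e0).
  split; last by rewrite tcompE !mxE !eqxx /= mulr1n; lra.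
  rewrite !(minkDl, minkZl, minkDr, minkZr) !mink_e0l !mink_e0r e00.
  have := mulr_ge0 (ltW he) h2; have := mulr_gt0 he he; nra.
have := hw _ hx; rewrite minkDr minkZr mink_e0r.
have hwb : w 0 i0 <= b by rewrite /b ler_norm.
have : eps * b = a - eps by rewrite /eps; field; rewrite lt0r_neq0 // ltr_wpDl.
move=> E H; have : eps * w 0 i0 <= eps * b by rewrite ler_pM2l.
rewrite /a in E; lra.
Qed.

Lemma spatial_zero r : r 0 i0 = 0 -> mink r r = 0 -> r = 0.
Proof.
move=> h0 h.
have hs : \sum_(j < D) (- (@sg R D j * (r 0 j * r 0 j))) = 0.
  by rewrite sumrN; move: h; rewrite /mink /sg => ->; rewrite oppr0.
have hnn : forall j : 'I_D, true -> 0 <= - (@sg R D j * (r 0 j * r 0 j)).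
  move=> j _; rewrite /sg; case: ifP => hj.
    have -> : j = i0 by apply/val_inj; apply/eqP.
    by rewrite h0 mul0r mulr0 oppr0.
  by rewrite mulN1r opprK -expr2 sqr_ge0.
have H := psumr_eq0P hnn hs.
apply/rowP => j; rewrite [RHS]mxE.
case: (eqVneq j i0) => [->|hj]; first by [].
have hv : (val j == 0%N) = false.
  by apply/negbTE; apply: contra hj => /eqP hj0; apply/eqP/val_inj.
move: (H j isT); rewrite /sg hv mulN1r opprK => /eqP; rewrite mulf_eq0 orbb.
by move/eqP.
Qed.

Lemma sg1 : @sg R D i1 = -1. Proof. by rewrite /sg. Qed.
Lemma sg2 : @sg R D i2 = -1. Proof. by rewrite /sg. Qed.
Lemma e1_0 : e1 0 i0 = 0. Proof. by rewrite mxE. Qed.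
Lemma e2_0 : e2 0 i0 = 0. Proof. by rewrite mxE. Qed.
Lemma e1_1 : e1 0 i1 = 1. Proof. by rewrite mxE !eqxx. Qed.
Lemma e2_2 : e2 0 i2 = 1. Proof. by rewrite mxE !eqxx. Qed.
Lemma e1_2 : e1 0 i2 = 0. Proof. by rewrite mxE. Qed.
Lemma e2_1 : e2 0 i1 = 0. Proof. by rewrite mxE. Qed.

Lemma exists_perp (n : 'rV[R]_D) :
  exists m : 'rV[R]_D, m 0 i0 = 0 /\ mink m m = -1 /\ mink m n = 0.
Proof.
set n1 := n 0 i1; set n2 := n 0 i2.
case: (boolP ((n1 == 0) && (n2 == 0))) => [/andP [/eqP h1 /eqP h2] | hnz].
  exists e1; split; first exact: e1_0.
  by rewrite !mink_deltal sg1 e1_1 -/n1 h1; split; ring.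
have hnu : 0 < n1 ^+ 2 + n2 ^+ 2.
  rewrite negb_and in hnz; case/orP: hnz => h.
    have : 0 < n1 ^+ 2 by rewrite exprn_even_gt0 // h orbT.
    have := sqr_ge0 n2; lra.
  have : 0 < n2 ^+ 2 by rewrite exprn_even_gt0 // h orbT.
  have := sqr_ge0 n1; lra.
set sig := Num.sqrt (n1 ^+ 2 + n2 ^+ 2).
have hs : 0 < sig by rewrite sqrtr_gt0.
have hs2 : sig ^+ 2 = n1 ^+ 2 + n2 ^+ 2 by rewrite sqr_sqrtr // ltW.
exists (sig^-1 *: (n2 *: e1 - n1 *: e2)); split.
  by rewrite !mxE /=; ring.
rewrite !(minkZl, minkZr, minkDl, minkDr, minkNl, minkNr) !mink_deltal sg1 sg2
  e1_1 e2_2 e1_2 e2_1 -/n1 -/n2; split.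
  have hsn : sig != 0 by rewrite lt0r_neq0.
  have -> : n2 * (n2 * (-1 * 1) - n1 * (-1 * 0)) +
    (n2 * - (n1 * (-1 * 0)) - n1 * - (n1 * (-1 * 1))) = - sig ^+ 2 by rewrite hs2; ring.
  by field.
ring.
Qed.

Lemma nonneg_Gamma p : Phi_nonneg G p -> in_Gamma p.
Proof.
move=> hP.
have hS0 : forall Y, 0 <= mink (br G Y Y) p.
  move=> Y; have := hP Y; rewrite /Phi pmulr_rge0 // invr_gt0 ltr0n //.
have hS : forall Y L, lorentz0 L -> 0 <= mink (br G Y Y *m L) p.
  by move=> Y L hL; have [Y' <-] := S_closed Y L hL.
set X0 : 'rV[R]_N := const_mx 1.
have hX0 : X0 != 0.
  apply/eqP => /matrixP /(_ 0 (Ordinal hN)); rewrite !mxE => /eqP; by rewrite oner_eq0.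
set v := br G X0 X0.
have hv : forall x, in_Gamma_plus x -> 0 < mink v x := fun x hx => br_pos G hX0 hx.
have ha : 0 < mink v e0 := hv _ e0_plus.
set p0 := p 0 i0.
set ps := p - p0 *: e0.
have hps0 : ps 0 i0 = 0 by rewrite /ps !mxE !eqxx /= mulr1 subrr.
have hdec : p = ps + p0 *: e0 by rewrite /ps subrK.
clearbody ps.
have hpp : mink p p = p0 ^+ 2 + mink ps ps.
  rewrite {1 2}hdec !(minkDl, minkDr, minkZl, minkZr) !mink_e0l !mink_e0r e00 hps0; ring.
have hle := @spatial_le0 R D hD0 _ hps0.
case: (eqVneq (mink ps ps) 0) => [h0 | hne].
  have psz : ps = 0 := spatial_zero _ hps0 h0.
  have hp : p = p0 *: e0 by rewrite hdec psz add0r.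
  have h := hS0 X0; rewrite -/v hp minkZr in h.
  have hp0 : 0 <= p0 by rewrite -(pmulr_lge0 _ ha).
  by split; rewrite ?tcompE -/p0 ?hpp ?h0 ?addr0 ?sqr_ge0.
have hlt : mink ps ps < 0 by rewrite lt_neqAle hne hle.
set mu := Num.sqrt (- mink ps ps).
have hmu : 0 < mu by rewrite sqrtr_gt0 oppr_gt0.
have hmu2 : mu ^+ 2 = - mink ps ps by rewrite sqr_sqrtr // oppr_ge0 ltW.
case: (lerP mu p0) => hmp.
  split; rewrite ?tcompE -/p0 ?hpp; nra.
exfalso.
have hmun : mu != 0 by rewrite lt0r_neq0.
pose n := mu^-1 *: ps.
have hn0 : n 0 i0 = 0 by rewrite /n mxE hps0 mulr0.
have hnn : mink n n = -1.
  by rewrite /n minkZl minkZr -[mink ps ps]opprK -hmu2; field.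
have hp : p = p0 *: e0 + mu *: n.
  by rewrite /n scalerA mulfV // scale1r addrC.
clearbody n.
have [m [hm0 [hmm hmn]]] := exists_perp n.
set a := mink v e0; set phi := mink v m.
have hkey : 0 < (17/8) * a - mink v n.
  have hx : in_Gamma_plus ((17/8 : R) *: e0 - n).
    split.
      rewrite !(minkDl, minkDr, minkZl, minkZr, minkNl, minkNr) !mink_e0l !mink_e0r e00 hn0 hnn; lra.
    rewrite tcompE -mink_e0r !(minkDl, minkZl, minkNl) !mink_e0r e00 hn0; lra.
  by have := hv _ hx; rewrite minkDr minkNr minkZr.
pose s1 : R := if phi <= 0 then 3/4 else -(3/4).
pose c1 : R := 5/4.
have hc1 : 0 < c1 by rewrite /c1; lra.
have hcs1 : c1 ^+ 2 - s1 ^+ 2 = 1 by rewrite /c1 /s1; case: ifP => _; field.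
have hL1 := @Bm2_lorentz R D hD0 m hmm hm0 c1 s1 hc1 hcs1.
have [Y1 hY1] := S_closed X0 _ hL1.
have hw1 : v *m (@Bm R D hD0 m c1 s1 *m @Bm R D hD0 m c1 s1) = @gfun R D hD0 m c1 s1 (@gfun R D hD0 m c1 s1 v).
  by rewrite mulmxA !BmE.
rewrite -/v hw1 in hY1.
set w1 := @gfun R D hD0 m c1 s1 (@gfun R D hD0 m c1 s1 v) in hY1.
have hA : 0 < mink w1 e0 - mink w1 n.
  rewrite /w1 (@g_e0 R D hD0 m hm0) (@g_e0 R D hD0 m hm0) (@g_f R D hD0 m hmm hm0).
  rewrite !(@g_perp R D hD0 m _ _ _ n hn0 hmn) -/a -/phi.
  rewrite /s1 /c1; case: ifP => hphi; lra.
clearbody w1.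
set a1 := mink w1 e0; set f1 := mink w1 n.
set A := a1 - f1; set B := a1 + f1.
have hQ : 0 < A * (mu - p0) by rewrite mulr_gt0 // subr_gt0.
set Q := A * (mu - p0).
set K := `|B * (p0 + mu)|.
have hK : 0 <= K by rewrite normr_ge0.
have hBK : B * (p0 + mu) <= K by rewrite ler_norm.
pose lam := 1 + K / Q.
have hKQ : 0 <= K / Q by rewrite divr_ge0 // ltW.
have hlam : 1 <= lam by rewrite /lam lerDl.
have hlam0 : lam != 0 by rewrite lt0r_neq0 // (lt_le_trans ltr01).
have hlamQ : lam * Q = Q + K by rewrite /lam; field; rewrite lt0r_neq0.
pose c2 := (lam + lam^-1) / 2; pose s2 := (lam - lam^-1) / 2.
have hc2 : 0 < c2.
  rewrite /c2 divr_gt0 // ltr_wpDr ?invr_ge0 //; first exact: (le_trans ler01 hlam).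
  exact: (lt_le_trans ltr01 hlam).
have hcs2 : c2 ^+ 2 - s2 ^+ 2 = 1 by rewrite /c2 /s2; field.
have hL2 := @Bm2_lorentz R D hD0 n hnn hn0 c2 s2 hc2 hcs2.
have h := hS Y1 _ hL2.
rewrite hY1 mulmxA !BmE [X in mink _ X]hp minkDr !minkZr in h.
rewrite (@g_e0 R D hD0 n hn0) (@g_e0 R D hD0 n hn0) (@g_f R D hD0 n hnn hn0) in h.
rewrite (@g_f R D hD0 n hnn hn0) (@g_e0 R D hD0 n hn0) (@g_f R D hD0 n hnn hn0) -/a1 -/f1 in h.
pose t := lam ^+ 2.
have ht : 1 <= t by rewrite /t; nra.
have E : p0 * (c2 * (c2 * a1 - s2 * f1) - s2 * (c2 * f1 - s2 * a1)) +
         mu * (c2 * (c2 * f1 - s2 * a1) - s2 * (c2 * a1 - s2 * f1)) =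
         (- (t * Q) + B * (p0 + mu) / t) / 2.
  by rewrite /t /Q /A /B /c2 /s2; field.
rewrite E in h.
have ht0 : 0 < t by exact: (lt_le_trans ltr01 ht).
have hX : B * (p0 + mu) / t <= K.
  rewrite ler_pdivrMr //; nra.
have htQ : lam * Q <= t * Q by rewrite /t; nra.
have hQ' : 0 < Q by [].
move: h hX; set X := B * (p0 + mu) / t => h hX.
clearbody X t lam; lra.
Qed.

Lemma Gamma_nonneg p : in_Gamma p -> Phi_nonneg G p.
Proof.
move=> hp X; rewrite /Phi; case: (eqVneq X 0) => [->|hX].
  have h := br_linear G 1 0 0 0.
  rewrite !scale1r addr0 in h.
  move/(congr1 (fun z => z - br G 0 0)): h; rewrite subrr addrK => <-.
  by rewrite mink0l mulr0.
apply: mulr_ge0; first by rewrite invr_ge0 ler0n.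
exact: (limit_lemma _ _ (fun x hx => br_pos G hX hx) hp).
Qed.

End Main.

Theorem lemma3p3p4 (R : realType) (D N : nat) (hD : (4 <= D)%N) (hN : (0 < N)%N)
  (G : super_poincare R D N) :
  (forall p : 'rV[R]_D, Phi_nonneg G p <-> in_Gamma p) /\
  (forall p : 'rV[R]_D, 0 < tcomp p -> 0 < mink p p -> Phi_posdef G p).
Proof.
split.
  move=> p; split; [exact: nonneg_Gamma | exact: Gamma_nonneg].
move=> p h1 h2 X hX; rewrite /Phi mulr_gt0 ?invr_gt0 ?ltr0n //.
by apply: br_pos => //; split.
Qed.
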